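(* Let $G$ be a directed graph with real edge weights and no cycle of negative or zero weight. For any vertices $v,w$ such that $w$ is reachable from $v$, there exist two shortest paths from $v$ to $w$ in $G$ whose common vertices are all $(v,w)$-distance-critical vertices.
   Context: $\mathrm{dist}(x,y,H)$ denotes the shortest-path distance from $x$ to $y$ in graph $H$. A vertex $u$ is $(v,w)$-distance-critical if $u\in\{v,w\}$ or $\mathrm{dist}(v,w,G\setminus\{u\})>\mathrm{dist}(v,w,G)$. *)

(* Defs.v *)
From HB Require Import structures.
From mathcomp Require Import all_boot all_order all_algebra.
From mathcomp Require Import reals.
Set Implicit Arguments. Unset Strict Implicit. Unset Printing Implicit Defensive.
Import Order.TTheory GRing.Theory Num.Theory.
Local Open Scope ring_scope.

Section Graphs.
Variables (R : realType) (V : finType).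

Definition pweight (wt : V -> V -> R) (v : V) (s : seq V) : R :=
  \sum_(e <- zip (v :: s) s) wt e.1 e.2.

Definition gpath (E : rel V) (v : V) (s : seq V) (w : V) : bool :=
  [&& path E v s, last v s == w & uniq (v :: s)].

Definition gcycle (E : rel V) (x : V) (s : seq V) : bool :=
  [&& s != [::], path E x s, last x s == x & uniq s].

Definition del_vertex (E : rel V) (u : V) : rel V :=
  fun x y => [&& E x y, x != u & y != u].

Definition reachable (E : rel V) (v w : V) : Prop := exists s, gpath E v s w.

Definition shortest_path (E : rel V) (wt : V -> V -> R) (v : V) (s : seq V) (w : V)
  : Prop :=
  gpath E v s w /\
  forall s', gpath E v s' w -> pweight wt v s <= pweight wt v s'.

(* dist(v,w,H) is the infimum (in R ∪ {+oo}, inf of the empty set = +oo) of the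
   weights of the v-w paths in H.  "dist(v,w,G\{u}) > dist(v,w,G)" unfolds to:
   there is a real e with  dist(v,w,G) < e <= dist(v,w,G\{u}), i.e. some v-w path
   of G has weight < e, and every v-w path of G\{u} has weight >= e. *)
Definition dist_increases (E : rel V) (wt : V -> V -> R) (v w u : V) : Prop :=
  exists e : R,
    (exists s, gpath E v s w /\ pweight wt v s < e) /\
    (forall s, gpath (del_vertex E u) v s w -> e <= pweight wt v s).

Definition distance_critical (E : rel V) (wt : V -> V -> R) (v w u : V) : Prop :=
  u = v \/ u = w \/ dist_increases E wt v w u.

End Graphs.

(* Main.v *)
Require Import Defs.
From HB Require Import structures.
From mathcomp Require Import all_boot all_order all_algebra.
From mathcomp Require Import reals lra zify.
From Stdlib Require Import Classical.
Import Order.TTheory GRing.Theory Num.Theory.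
Local Open Scope ring_scope.

Section Aux.
Variables (R : realType) (V : finType) (E : rel V) (wt : V -> V -> R).
Hypothesis hcyc : forall (x : V) (s : seq V), gcycle E x s -> 0 < pweight wt x s.

Lemma pw_nil x : pweight wt x [::] = 0.
Proof. by rewrite /pweight /= big_nil. Qed.

Lemma pw_cons x y s : pweight wt x (y :: s) = wt x y + pweight wt y s.
Proof. by rewrite /pweight /= big_cons. Qed.

Lemma pw_cat x s t : pweight wt x (s ++ t) = pweight wt x s + pweight wt (last x s) t.
Proof.
elim: s x => [|y s IH] x /=; first by rewrite pw_nil add0r.
by rewrite !pw_cons IH addrA.
Qed.

Lemma dup_split s x : ~~ uniq (x :: s) ->
  exists t1 c t2 : seq V, [/\ s = t1 ++ c ++ t2, c != [::] & last (last x t1) c = last x t1].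
Proof.
elim: s x => [|y s IH] x; first by [].
rewrite [uniq _]/= negb_and negbK => /orP[Hx|Hu].
  case/splitPr: Hx => p1 p2.
  exists [::], (rcons p1 x), p2; split => //.
  - by rewrite /= cat_rcons.
  - by case: p1.
  - by rewrite /= last_rcons.
have [t1 [c [t2 [-> Hc Hl]]]] := IH y Hu.
by exists (y :: t1), c, t2.
Qed.

Lemma closed_pos (n : nat) : forall (s : seq V) (x : V), (size s <= n)%N -> s != [::] -> path E x s -> last x s = x ->
  0 < pweight wt x s.
Proof.
elim: n => [|n IH] s x Hn Hs Hp Hl; first by case: s Hn Hs Hp Hl.
case Hu: (uniq s).
  by apply: hcyc; apply/and4P; split => //; apply/eqP.
case: s Hn Hs Hp Hl Hu => [//|y s] Hn _ Hp Hl Hu.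
have [t1 [c [t2 [Es Hc Hcl]]]] := dup_split s y (negbT Hu).
subst s.
have Es : y :: t1 ++ c ++ t2 = (y :: t1) ++ c ++ t2 by [].
rewrite Es in Hp Hl Hn *.
move: Hp; rewrite !cat_path => /and3P[Hp1 Hp2 Hp3].
rewrite !pw_cat.
set z := last x (y :: t1).
have Ez : z = last y t1 by [].
have Hlc : last z c = z by rewrite Ez.
rewrite Hlc in Hp3 *.
have Hc' : (0 < size c)%N by rewrite lt0n size_eq0.
have Hsz : size ((y :: t1) ++ c ++ t2) = (size (y :: t1) + size c + size t2)%N.
  by rewrite !size_cat addnA.
have H1 : 0 < pweight wt z c.
  apply: (IH c z) => //.
  move: Hn; rewrite Hsz /=; lia.
have H2 : 0 < pweight wt x ((y :: t1) ++ t2).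
  apply: (IH _ x) => //.
  - move: Hn; rewrite Hsz size_cat /=; lia.
  - by rewrite cat_path Hp1 -/z Hp3.
  - move: Hl; rewrite !last_cat -/z Hlc => <-; by [].
rewrite pw_cat -/z in H2.
lra.
Qed.


Lemma walk_reduce (n : nat) : forall (s : seq V) (x : V), (size s <= n)%N -> path E x s ->
  exists s' : seq V, [/\ gpath E x s' (last x s), pweight wt x s' <= pweight wt x s &
     (~~ uniq (x :: s) -> pweight wt x s' < pweight wt x s)].
Proof.
elim: n => [|n IH] s x Hn Hp; case Hu: (uniq (x :: s)).
- by exists s; split => //; rewrite /gpath Hp eqxx Hu.
- by case: s Hn Hp Hu.
- by exists s; split => //; rewrite /gpath Hp eqxx Hu.
have [t1 [c [t2 [Es Hc Hcl]]]] := dup_split s x (negbT Hu).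
subst s.
move: Hp; rewrite !cat_path Hcl => /and3P[Hp1 Hp2 Hp3].
have Hc' : (0 < size c)%N by rewrite lt0n size_eq0.
have Hpos : 0 < pweight wt (last x t1) c.
  by apply: (closed_pos (size c)).
have [s' [Hg Hle _]] := IH (t1 ++ t2) x
   ltac:(move: Hn; rewrite !size_cat; lia) ltac:(by rewrite cat_path Hp1 Hp3).
exists s'; split.
- by move: Hg; rewrite !last_cat Hcl.
- move: Hle; rewrite !pw_cat Hcl; lra.
- move=> _; move: Hle; rewrite !pw_cat Hcl; lra.
Qed.

Variables (v w : V).

Lemma walk_ge s0 s : shortest_path E wt v s0 w -> path E v s -> last v s = w ->
  pweight wt v s0 <= pweight wt v s.
Proof.
move=> [_ Hmin] Hp Hl.
have [s' [Hg Hle _]] := walk_reduce (size s) s v (leqnn _) Hp.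
rewrite Hl in Hg.
exact: le_trans (Hmin _ Hg) Hle.
Qed.

Lemma walk_sp s0 s : shortest_path E wt v s0 w -> path E v s -> last v s = w ->
  pweight wt v s <= pweight wt v s0 -> shortest_path E wt v s w.
Proof.
move=> [Hg0 Hmin] Hp Hl Hle.
have [s' [Hg Hle' Hlt]] := walk_reduce (size s) s v (leqnn _) Hp.
rewrite Hl in Hg.
have H1 := Hmin _ Hg.
have Hu : uniq (v :: s).
  apply/negPn/negP => /Hlt Hlt'. by have := lt_le_trans Hlt' (le_trans Hle H1); rewrite ltxx.
split; first by rewrite /gpath Hp Hl eqxx Hu.
move=> t Ht; exact: le_trans Hle (Hmin _ Ht).
Qed.

Lemma glue_sp a b a' b' : shortest_path E wt v (a ++ b) w ->
  shortest_path E wt v (a' ++ b') w -> last v a = last v a' ->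
  shortest_path E wt v (a ++ b') w.
Proof.
move=> H1 H2 Hl.
have [Hg1 Hm1] := H1; have [Hg2 Hm2] := H2.
move: (Hg1) (Hg2) => /and3P[P1 L1 _] /and3P[P2 L2 _].
move: P1 P2 L1 L2; rewrite !cat_path !last_cat -Hl.
move=> /andP[Pa Pb] /andP[Pa' Pb'] /eqP Lb /eqP Lb'.
have E1 := Hm1 _ Hg2. have E2 := Hm2 _ Hg1.
have W1 : pweight wt v (a ++ b) <= pweight wt v (a ++ b').
  by apply: walk_ge => //; rewrite ?cat_path ?Pa ?Pb' // last_cat.
have W2 : pweight wt v (a ++ b) <= pweight wt v (a' ++ b).
  by apply: walk_ge => //; rewrite ?cat_path ?Pa' -?Hl ?Pb // last_cat -Hl.
apply: (walk_sp _ _ H1); rewrite ?cat_path ?Pa ?Pb' ?last_cat //.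
move: E1 E2 W1 W2; rewrite !pw_cat -Hl; lra.
Qed.


Fixpoint allseqs (n : nat) : seq (seq V) :=
  if n is n'.+1 then [::] :: [seq x :: t | x <- enum V, t <- allseqs n'] else [:: [::]].

Lemma mem_allseqs (n : nat) (s : seq V) : (size s <= n)%N -> s \in allseqs n.
Proof.
elim: n s => [|n IH] [|x s] //= Hs.
rewrite in_cons; apply/orP; right; apply/allpairsP; exists (x, s); split => //.
- by rewrite mem_enum.
- exact: IH.
Qed.

Lemma list_min (f : seq V -> R) (L : seq (seq V)) x0 : x0 \in L ->
  exists2 x, x \in L & forall y, y \in L -> f x <= f y.
Proof.
elim: L x0 => // a L IH x0 _.
case: L IH => [|b L] IH.
  by exists a; rewrite ?mem_head // => y; rewrite inE => /eqP ->.
have [x Hx Hm] := IH b (mem_head _ _).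
case: (leP (f a) (f x)) => Hax.
  exists a; first exact: mem_head.
  move=> y; rewrite in_cons => /orP[/eqP -> //|/Hm]; exact: le_trans.
exists x; first by rewrite in_cons Hx orbT.
move=> y; rewrite in_cons => /orP[/eqP ->|/Hm //]; exact: ltW.
Qed.

Lemma ex_min (P : pred (seq V)) (f : seq V -> R) :
  (forall s, P s -> (size s <= #|V|)%N) -> (exists s, P s) ->
  exists s, P s /\ forall t, P t -> f s <= f t.
Proof.
move=> Hsz [s0 Hs0].
have H0 : s0 \in filter P (allseqs #|V|) by rewrite mem_filter Hs0 mem_allseqs // Hsz.
have [x Hx Hm] := list_min f _ _ H0.
move: Hx; rewrite mem_filter => /andP[Px _].
exists x; split => // t Pt; apply: Hm.
by rewrite mem_filter Pt mem_allseqs // Hsz.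
Qed.

Lemma gpath_size (E' : rel V) (x : V) (s : seq V) (y : V) : gpath E' x s y -> (size s <= #|V|)%N.
Proof.
move=> /and3P[_ _ /card_uniqP Hc].
have := max_card (mem (x :: s)); rewrite Hc /=; lia.
Qed.

Lemma segment (A C : pred V) : forall (sq : seq V) (a0 : V), A a0 -> C (last a0 sq) ->
  ~~ A (last a0 sq) -> exists t1 m (b : V) t3, [/\ sq = t1 ++ m ++ b :: t3, A (last a0 t1),
    all (predC C) m, C b & ~~ A b].
Proof.
elim=> [|y s IH] a0 HA HC HnA; first by rewrite /= HA in HnA.
case Ay: (A y).
  have [t1 [m [b [t3 [-> H1 H2 H3 H4]]]]] := IH y Ay HC HnA.
  by exists (y :: t1), m, b, t3.
case Cy: (C y).
  by exists [::], [::], y, s; rewrite Ay Cy.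
case: s IH HC HnA => [|z s] IH HC HnA; first by rewrite /= Cy in HC.
have [t1 [m [b [t3 [Es H1 H2 H3 H4]]]]] := IH a0 HA HC HnA.
case: t1 Es H1 => [|u t1] Es H1.
  by exists [::], (y :: m), b, t3; rewrite /= Es Cy H2.
by exists (y :: u :: t1), m, b, t3; rewrite Es.
Qed.

Lemma split_at (x y : V) s : y \in x :: s -> exists s1 s2, s = s1 ++ s2 /\ last x s1 = y.
Proof. by case/splitPl => s1 s2 Hl; exists s1, s2. Qed.
Arguments split_at {x y s}.

Lemma uniq_disj (l1 l2 : seq V) y : uniq (l1 ++ l2) -> y \in l1 -> y \notin l2.
Proof.
rewrite cat_uniq => /and3P[_ /hasPn H _] Hy; apply/negP => /H; by rewrite Hy.
Qed.
Arguments uniq_disj {l1 l2 y}.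


Definition common (s1 s2 : seq V) : {set V} :=
  [set y | (y \in v :: s1) && (y \in v :: s2)].

Lemma commonC s1 s2 : common s1 s2 = common s2 s1.
Proof. by apply/setP => y; rewrite !inE andbC. Qed.

Lemma sp_uniq s : shortest_path E wt v s w -> uniq (v :: s).
Proof. by case => /and3P[]. Qed.
Arguments sp_uniq {s}.

Lemma improve (x : V) p1 q1 p2 q2 t1 m (b : V) t3 :
  shortest_path E wt v (p1 ++ q1) w -> shortest_path E wt v (p2 ++ q2) w ->
  last v p1 = x -> last v p2 = x ->
  shortest_path E wt v (t1 ++ m ++ b :: t3) w ->
  last v t1 \in v :: p1 -> last v t1 != x ->
  (b \in q1) || (b \in q2) ->
  (forall y, y \in m -> (y \notin v :: p1 ++ q1) && (y \notin v :: p2 ++ q2)) ->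
  exists s1' s2', [/\ shortest_path E wt v s1' w, shortest_path E wt v s2' w &
     common s1' s2' \proper common (p1 ++ q1) (p2 ++ q2)].
Proof.
move=> H1 H2 Hx1 Hx2 HQ Ha Hax Hb Hm.
have U1 := sp_uniq H1; have U2 := sp_uniq H2.
have [p1a [p1b [Ep1 Hla]]] := split_at Ha.
subst p1.
have HR : shortest_path E wt v (p1a ++ (m ++ b :: t3)) w.
  apply: (glue_sp p1a (p1b ++ q1) t1) => //; by rewrite catA.
have ER : p1a ++ m ++ b :: t3 = (p1a ++ rcons m b) ++ t3 by rewrite -cats1 -!catA.
rewrite ER in HR.
have LR : last v (p1a ++ rcons m b) = b by rewrite last_cat last_rcons.
have Hxb : last (last v t1) p1b = x by rewrite -Hla -last_cat.
have Hxp1b : x \in p1b.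
  have := mem_last (last v t1) p1b; rewrite Hxb in_cons eq_sym (negbTE Hax) //.
have Hxp2 : x \in v :: p2 by rewrite -Hx2 mem_last.
have O1 : v :: (p1a ++ p1b) ++ q1 = (v :: p1a) ++ p1b ++ q1 by rewrite -catA.
rewrite O1 in U1 Hm.
case/orP: Hb => Hb.
-
  have [q1a [q1b [Eq1 Hlb]]] := split_at (x := x) (y := b) (s := q1) ltac:(by rewrite in_cons Hb orbT).
  subst q1.
  have Hbx : b != x.
    apply/eqP => Ebx; move: Hb; rewrite Ebx => Hb.
    have : x \in (v :: p1a) ++ p1b by rewrite mem_cat Hxp1b orbT.
    by move/(uniq_disj (l2 := q1a ++ q1b)); rewrite catA in U1 => /(_ U1); rewrite Hb.
  have Hbq1a : b \in q1a.
    by have := mem_last x q1a; rewrite Hlb in_cons (negbTE Hbx).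
  have HP1 : shortest_path E wt v ((p1a ++ rcons m b) ++ q1b) w.
    apply: (glue_sp _ t3 (p1a ++ p1b ++ q1a)) => //.
      by move: H1; rewrite -!catA.
    by rewrite LR !last_cat Hla Hxb Hlb.
  exists ((p1a ++ rcons m b) ++ q1b), (p2 ++ q2); split => //.
  have N1 : forall y, (y \in v :: (p1a ++ rcons m b) ++ q1b) =
     [|| y \in v :: p1a, y \in m, y == b | y \in q1b].
    by move=> y; rewrite -cats1 -!catA -cat_cons !mem_cat mem_seq1.
  have Ol1 : forall y, (y \in v :: (p1a ++ p1b) ++ q1a ++ q1b) =
     [|| y \in v :: p1a, y \in p1b, y \in q1a | y \in q1b].
    by move=> y; rewrite -!catA -cat_cons !mem_cat.
  have Fy : forall y, [&& (y \in v :: p1a) ==> ~~ [|| y \in p1b, y \in q1a | y \in q1b],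
       (y \in p1b) ==> ~~ ((y \in q1a) || (y \in q1b)),
       (y \in m) ==> ~~ [|| y \in v :: p1a, y \in p1b, y \in q1a | y \in q1b] && (y \notin v :: p2 ++ q2) &
       (y == b) ==> (y \in q1a)].
    move=> y; apply/and4P; split.
    + apply/implyP => Hy; rewrite -!mem_cat; exact: uniq_disj U1 Hy.
    + apply/implyP => Hy; rewrite -mem_cat.
      have U1' : uniq (((v :: p1a) ++ p1b) ++ q1a ++ q1b) by rewrite -catA.
      apply: uniq_disj U1' _; by rewrite mem_cat Hy orbT.
    + apply/implyP => /Hm; by rewrite !mem_cat.
    + by apply/implyP => /eqP ->.
  have T : forall A1 B1 Qa Qb M Bb O2 : bool,
     [&& A1 ==> ~~ [|| B1, Qa | Qb], B1 ==> ~~ (Qa || Qb),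
         M ==> ~~ [|| A1, B1, Qa | Qb] && ~~ O2 & Bb ==> Qa] ->
     ([|| A1, M, Bb | Qb] && O2 ==> [|| A1, B1, Qa | Qb] && O2) &&
     (B1 ==> ~~ [|| A1, M, Bb | Qb]).
    by do 7!case.
  apply/properP; split.
    apply/subsetP => y; rewrite !in_set N1 Ol1.
    by have /andP[/implyP H _] := T _ _ _ _ _ _ (y \in v :: p2 ++ q2) (Fy y).
  exists x.
    by rewrite in_set Ol1 Hxp1b orbT /= -cat_cons mem_cat Hxp2.
  rewrite in_set N1; apply/negP => /andP[Hn _].
  have /andP[_ /implyP H] := T _ _ _ _ _ _ (x \in v :: p2 ++ q2) (Fy x).
  by move: (H Hxp1b); rewrite Hn.
-
  have [q2a [q2b [Eq2 Hlb]]] := split_at (x := x) (y := b) (s := q2) ltac:(by rewrite in_cons Hb orbT).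
  subst q2.
  have Hbx : b != x.
    apply/eqP => Ebx; move: Hb; rewrite Ebx => Hb.
    by have := uniq_disj (l1 := v :: p2) (l2 := q2a ++ q2b) U2 Hxp2; rewrite Hb.
  have Hbq2a : b \in q2a.
    by have := mem_last x q2a; rewrite Hlb in_cons (negbTE Hbx).
  have HP1 : shortest_path E wt v ((p1a ++ rcons m b) ++ q2b) w.
    apply: (glue_sp _ t3 (p2 ++ q2a)) => //.
      by move: H2; rewrite -!catA.
    by rewrite LR last_cat Hx2 Hlb.
  have HP2 : shortest_path E wt v (p2 ++ q1) w.
    apply: (glue_sp _ (q2a ++ q2b) (p1a ++ p1b)) => //.
    by rewrite Hx2.
  exists ((p1a ++ rcons m b) ++ q2b), (p2 ++ q1); split => //.
  have N1 : forall y, (y \in v :: (p1a ++ rcons m b) ++ q2b) =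
     [|| y \in v :: p1a, y \in m, y == b | y \in q2b].
    by move=> y; rewrite -cats1 -!catA -cat_cons !mem_cat mem_seq1.
  have N2 : forall y, (y \in v :: p2 ++ q1) = (y \in v :: p2) || (y \in q1).
    by move=> y; rewrite -cat_cons mem_cat.
  have Ol1 : forall y, (y \in v :: (p1a ++ p1b) ++ q1) =
     [|| y \in v :: p1a, y \in p1b | y \in q1].
    by move=> y; rewrite -!catA -cat_cons !mem_cat.
  have Ol2 : forall y, (y \in v :: p2 ++ q2a ++ q2b) =
     [|| y \in v :: p2, y \in q2a | y \in q2b].
    by move=> y; rewrite -cat_cons !mem_cat.
  have Fy : forall y, [&& (y \in v :: p1a) ==> ~~ ((y \in p1b) || (y \in q1)),
       (y \in p1b) ==> ~~ (y \in q1),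
       (y \in v :: p2) ==> ~~ ((y \in q2a) || (y \in q2b)),
       (y \in m) ==> ~~ [|| y \in v :: p1a, y \in p1b | y \in q1] &&
                      ~~ [|| y \in v :: p2, y \in q2a | y \in q2b] &
       (y == b) ==> (y \in q2a)].
    move=> y; apply/and5P; split.
    + apply/implyP => Hy; rewrite -!mem_cat; exact: uniq_disj U1 Hy.
    + apply/implyP => Hy.
      have U1' : uniq (((v :: p1a) ++ p1b) ++ q1) by rewrite -catA.
      apply: uniq_disj U1' _; by rewrite mem_cat Hy orbT.
    + apply/implyP => Hy; rewrite -!mem_cat; exact: (uniq_disj (l1 := v :: p2) U2 Hy).
    + apply/implyP => /Hm; by rewrite -!cat_cons !mem_cat.
    + by apply/implyP => /eqP ->.
  have T : forall A1 B1 Q1 A2 Qa Qb M Bb : bool,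
     [&& A1 ==> ~~ (B1 || Q1), B1 ==> ~~ Q1, A2 ==> ~~ (Qa || Qb),
         M ==> ~~ [|| A1, B1 | Q1] && ~~ [|| A2, Qa | Qb] & Bb ==> Qa] ->
     ([|| A1, M, Bb | Qb] && (A2 || Q1) ==> [|| A1, B1 | Q1] && [|| A2, Qa | Qb]) &&
     (B1 && A2 ==> ~~ ([|| A1, M, Bb | Qb] && (A2 || Q1))).
    by do 8!case.
  apply/properP; split.
    apply/subsetP => y; rewrite !in_set N1 N2 Ol1 Ol2.
    by have /andP[/implyP H _] := T _ _ _ _ _ _ _ _ (Fy y).
  exists x.
    by rewrite in_set Ol1 Ol2 Hxp1b Hxp2 orbT.
  rewrite in_set N1 N2.
  have /andP[_ /implyP H] := T _ _ _ _ _ _ _ _ (Fy x).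
  by apply: H; rewrite Hxp1b Hxp2.
Qed.


Lemma endpt (x : V) p q : uniq (v :: p ++ q) -> last v p = x -> last v (p ++ q) = w ->
  w \in v :: p -> w = x.
Proof.
move=> U Hx Hw Hin.
rewrite last_cat Hx in Hw.
case: q U Hw => [|z q] U Hw; first by rewrite -Hw.
have Hz : w \in z :: q by rewrite -Hw /= mem_last.
by have := uniq_disj (l1 := v :: p) U Hin; rewrite Hz.
Qed.

Arguments endpt {x p q}.

Lemma del_avoid (x : V) : forall s a, path (del_vertex E x) a s -> forall y, y \in s -> y != x.
Proof.
elim=> [|z s IH] a //= /andP[/and3P[_ _ Hz] Hp] y; rewrite in_cons => /orP[/eqP->//|].
exact: IH Hp y.
Qed.

Arguments del_avoid {x}.
Arguments improve {x p1 q1 p2 q2 t1 m b t3}.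

Lemma main_aux : reachable E v w -> exists s1 s2 : seq V,
    [/\ shortest_path E wt v s1 w, shortest_path E wt v s2 w &
        forall x : V, x \in v :: s1 -> x \in v :: s2 ->
          distance_critical E wt v w x].
Proof.
move=> [s0 Hs0].
have [sm [Hsm Hmin]] := ex_min (fun s => gpath E v s w) (pweight wt v)
   (fun s H => gpath_size _ _ _ _ H) (ex_intro _ s0 Hs0).
have Hsp : shortest_path E wt v sm w by split.
suff H : forall n s1 s2, shortest_path E wt v s1 w -> shortest_path E wt v s2 w ->
   (#|common s1 s2| <= n)%N -> exists s1 s2 : seq V,
    [/\ shortest_path E wt v s1 w, shortest_path E wt v s2 w &
        forall x : V, x \in v :: s1 -> x \in v :: s2 ->
          distance_critical E wt v w x].
  exact: (H _ sm sm Hsp Hsp (leqnn _)).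
elim=> [|n IH] s1 s2 H1 H2 Hn.
  have Hv : v \in common s1 s2 by rewrite in_set !mem_head.
  by move: Hn; rewrite leqn0 cards_eq0 => /eqP E0; rewrite E0 in_set0 in Hv.
case: (classic (forall x, x \in v :: s1 -> x \in v :: s2 -> distance_critical E wt v w x)) => Hc.
  by exists s1, s2.
have [x Hx] := not_all_ex_not _ _ Hc.
have X1 : x \in v :: s1.
  by apply/negPn/negP => N; apply: Hx => H; rewrite H in N.
have X2 : x \in v :: s2.
  by apply/negPn/negP => N; apply: Hx => _ H; rewrite H in N.
have Hxv : x != v by apply/eqP => Ex; apply: Hx => _ _; left.
have Hxw : x != w by apply/eqP => Ex; apply: Hx => _ _; right; left.
have Hnd : ~ dist_increases E wt v w x by move=> D; apply: Hx => _ _; right; right.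
have [sq [HQd HQ]] : exists sq, gpath (del_vertex E x) v sq w /\ shortest_path E wt v sq w.
  case: (classic (exists s, gpath (del_vertex E x) v s w)) => Hex.
  - have [sq [Hsq Hqm]] := ex_min (fun s => gpath (del_vertex E x) v s w) (pweight wt v)
       (fun s H => gpath_size _ _ _ _ H) Hex.
    have Hsq' : gpath E v sq w.
      move: (Hsq) => /and3P[P L U]; apply/and3P; split => //.
      by apply: sub_path P => a c /and3P[].
    case: (leP (pweight wt v sq) (pweight wt v s1)) => Hle.
      exists sq; split => //; split => // t Ht; exact: le_trans Hle (proj2 H1 t Ht).
    exfalso; apply: Hnd; exists (pweight wt v sq); split.
      by exists s1; split => //; exact: (proj1 H1).
    by move=> s Hs; exact: Hqm.
  - exfalso; apply: Hnd; exists (pweight wt v s1 + 1); split.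
      by exists s1; split; [exact: (proj1 H1) | rewrite ltrDl ltr01].
    by move=> s Hs; exfalso; apply: Hex; exists s.
have Hav : forall y, y \in sq -> y != x.
  by move: HQd => /and3P[P _ _]; exact: del_avoid P.
have [p1 [q1 [Es1 Hl1]]] := split_at X1. subst s1.
have [p2 [q2 [Es2 Hl2]]] := split_at X2. subst s2.
have U1 := sp_uniq H1; have U2 := sp_uniq H2.
have Hw1 : last v (p1 ++ q1) = w by case: H1 => /and3P[_ /eqP -> _].
have Hw2 : last v (p2 ++ q2) = w by case: H2 => /and3P[_ /eqP -> _].
have Hwq : last v sq = w by case: HQ => /and3P[_ /eqP -> _].
pose A := [pred y | ((y \in v :: p1) || (y \in v :: p2)) && (y != x)].
pose C := [pred y | (y \in v :: p1 ++ q1) || (y \in v :: p2 ++ q2)].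
have Av : A v by rewrite /A /= !mem_head eq_sym Hxv.
have Cw : C (last v sq) by rewrite Hwq /C /= -{1}Hw1 mem_last.
have nAw : ~~ A (last v sq).
  rewrite Hwq /A /=; apply/negP => /andP[/orP[Hin|Hin] /eqP Hne]; apply: Hne.
  - exact: (endpt U1 Hl1 Hw1 Hin).
  - exact: (endpt U2 Hl2 Hw2 Hin).
have [t1 [m [b [t3 [Esq HA Hm HC HnA]]]]] := segment A C sq v Av Cw nAw.
have Hbx : b != x by apply: Hav; rewrite Esq !mem_cat in_cons eqxx !orbT.
have Hb : (b \in q1) || (b \in q2).
  move: HC HnA; rewrite /A /C /= -!cat_cons !mem_cat Hbx andbT negb_or.
  by case: (b \in v :: p1); case: (b \in v :: p2).
have Hm' : forall y, y \in m -> (y \notin v :: p1 ++ q1) && (y \notin v :: p2 ++ q2).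
  by move=> y /(allP Hm); rewrite /= negb_or.
rewrite Esq in HQ.
move: HA; rewrite /A /= => /andP[/orP[Ha|Ha] Hax].
- have [s1' [s2' [S1 S2 Hpr]]] := improve H1 H2 Hl1 Hl2 HQ Ha Hax Hb Hm'.
  apply: (IH s1' s2' S1 S2).
  by rewrite -ltnS; apply: leq_trans (proper_card Hpr) Hn.
- have Hm'' : forall y, y \in m -> (y \notin v :: p2 ++ q2) && (y \notin v :: p1 ++ q1).
    by move=> y /Hm'; rewrite andbC.
  have [s1' [s2' [S1 S2 Hpr]]] := improve H2 H1 Hl2 Hl1 HQ Ha Hax (etrans (orbC _ _) Hb) Hm''.
  rewrite (commonC (p2 ++ q2)) in Hpr.
  apply: (IH s1' s2' S1 S2).
  by rewrite -ltnS; apply: leq_trans (proper_card Hpr) Hn.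
Qed.

End Aux.

Theorem mainTheorem7 (R : realType) (V : finType) (E : rel V) (wt : V -> V -> R)
  (hcyc : forall (x : V) (s : seq V), gcycle E x s -> 0 < pweight wt x s)
  (v w : V) (hreach : reachable E v w) :
  exists s1 s2 : seq V,
    [/\ shortest_path E wt v s1 w, shortest_path E wt v s2 w &
        forall x : V, x \in v :: s1 -> x \in v :: s2 ->
          distance_critical E wt v w x].
Proof. exact: (@main_aux R V E wt hcyc v w hreach). Qed.
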